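(* Let $L\colon \widehat{\Delta}\to\widehat{\Box}$ be the functor given by $L(X)([1]^n) = \int^{[m]\in\Delta} X_m \times \mathbf{Poset}([1]^n,[m])$. Equivalently, $L$ is the colimit-preserving functor with $L(y[m]) = \mathbf{Poset}(-,[m])|_{\Box}$; it is the leftmost adjoint in the essential geometric embedding $\widehat{\Delta}\to\widehat{\Box}$. Then $L$ preserves monomorphisms.
   Context: $\Delta$ is the simplex category, the full subcategory of $\mathbf{Poset}$ on $[m]=\{0<\dots<m\}$, $m\ge0$. $\Box$ is the full subcategory of $\mathbf{Poset}$ on $[1]^n$, $n \ge 0$. $\widehat{\mathcal{C}}$ denotes presheaves of sets on $\mathcal{C}$ and $y$ is the Yoneda embedding. The functor $L$ is left adjoint to the functor $T\colon\widehat{\Box}\to\widehat{\Delta}$, $T(Y)=\int^{n} Y([1]^n)\times N([1]^n)$, where $N$ denotes the nerve; on representables $T(y[1]^n)=(\Delta^1)^n$. *)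

(* Defs.v *)
From mathcomp Require Import all_boot.
From Stdlib Require Import FunctionalExtensionality PropExtensionality ProofIrrelevance.

Set Implicit Arguments.
Unset Strict Implicit.
Unset Printing Implicit Defensive.

(* The categories Delta and Box, as full subcategories of Poset.       *)
(* [m] = {0 < ... < m} is represented by 'I_m.+1 (nat order);           *)
(* [1]^n is represented by cube n = bool^n with the product order.       *)

Definition cube (n : nat) := {ffun 'I_n -> bool}.
Definition cle (n : nat) (u v : cube n) : bool := [forall i, u i ==> v i].

Record dhom (m k : nat) := DHom {
  dfun :> 'I_m.+1 -> 'I_k.+1;
  dmono : forall i j : 'I_m.+1, i <= j -> dfun i <= dfun j }.

Record bhom (n k : nat) := BHom {
  bfun :> cube n -> cube k;
  bmono : forall u v : cube n, cle u v -> cle (bfun u) (bfun v) }.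

Record chom (n m : nat) := CHom {
  cfun :> cube n -> 'I_m.+1;
  cmono : forall u v : cube n, cle u v -> cfun u <= cfun v }.

Arguments dmono {m k} d {i j}.
Arguments bmono {n k} b {u v}.
Arguments cmono {n m} c {u v}.

Definition did (m : nat) : dhom m m := @DHom m m (fun i => i) (fun i j h => h).
Definition dcomp (m k l : nat) (g : dhom k l) (f : dhom m k) : dhom m l :=
  @DHom m l (fun i => g (f i)) (fun i j h => dmono g (dmono f h)).
Definition bid (n : nat) : bhom n n := @BHom n n (fun u => u) (fun u v h => h).
Definition bcomp (n k l : nat) (g : bhom k l) (f : bhom n k) : bhom n l :=
  @BHom n l (fun u => g (f u)) (fun u v h => bmono g (bmono f h)).
Definition dc (n m k : nat) (f : dhom m k) (p : chom n m) : chom n k :=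
  @CHom n k (fun u => f (p u)) (fun u v h => dmono f (cmono p h)).
Definition cb (n' n m : nat) (p : chom n m) (g : bhom n' n) : chom n' m :=
  @CHom n' m (fun u => p (g u)) (fun u v h => cmono p (bmono g h)).

Record sSet := SSet {
  sob :> nat -> Type;
  sact : forall m k, dhom m k -> sob k -> sob m;
  sact_id : forall m (x : sob m), sact (did m) x = x;
  sact_comp : forall m k l (f : dhom m k) (g : dhom k l) (x : sob l),
      sact (dcomp g f) x = sact f (sact g x) }.
Arguments sact {s m k}.

Record smap (X Y : sSet) := SMap {
  smf :> forall m, X m -> Y m;
  snat : forall m k (f : dhom m k) (x : X k), smf (sact f x) = sact f (smf x) }.

Record cSet := CSet {
  cob :> nat -> Type;
  cact : forall n k, bhom n k -> cob k -> cob n;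
  cact_id : forall n (x : cob n), cact (bid n) x = x;
  cact_comp : forall n k l (f : bhom n k) (g : bhom k l) (x : cob l),
      cact (bcomp g f) x = cact f (cact g x) }.
Arguments cact {c n k}.

Record cmap (X Y : cSet) := CMap {
  cmf :> forall n, X n -> Y n;
  cnat : forall n k (f : bhom n k) (x : X k), cmf (cact f x) = cact f (cmf x) }.

Definition sMono (X Y : sSet) (f : smap X Y) : Prop :=
  forall (Z : sSet) (g h : smap Z X),
    (forall m (z : Z m), f m (g m z) = f m (h m z)) ->
    forall m (z : Z m), g m z = h m z.

Definition cMono (X Y : cSet) (f : cmap X Y) : Prop :=
  forall (Z : cSet) (g h : cmap Z X),
    (forall n (z : Z n), f n (g n z) = f n (h n z)) ->
    forall n (z : Z n), g n z = h n z.

Inductive eqc (T : Type) (r : T -> T -> Prop) : T -> T -> Prop :=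
| eqc_step a b : r a b -> eqc r a b
| eqc_refl a : eqc r a a
| eqc_sym a b : eqc r a b -> eqc r b a
| eqc_trans a b c : eqc r a b -> eqc r b c -> eqc r a c.

Definition quot (T : Type) (r : T -> T -> Prop) :=
  {S : T -> Prop | exists a, S = eqc r a}.

Definition cls (T : Type) (r : T -> T -> Prop) (a : T) : quot r :=
  exist _ (eqc r a) (ex_intro _ a erefl).

Lemma eqc_map (T U : Type) (r : T -> T -> Prop) (r' : U -> U -> Prop)
  (phi : T -> U) (hphi : forall a b, r a b -> eqc r' (phi a) (phi b)) :
  forall a b, eqc r a b -> eqc r' (phi a) (phi b).
Proof.
move=> a b; elim => {a b} [a b /hphi //|a|a b _ IH|a b c _ IH1 _ IH2].
- exact: eqc_refl.
- exact: eqc_sym.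
- exact: eqc_trans IH1 IH2.
Qed.

Lemma lift_pred_eq (T U : Type) (r : T -> T -> Prop) (r' : U -> U -> Prop)
  (phi : T -> U) (hphi : forall a b, r a b -> eqc r' (phi a) (phi b)) (a : T) :
  (fun b => exists a', eqc r a a' /\ eqc r' (phi a') b) = eqc r' (phi a).
Proof.
apply: functional_extensionality => b; apply: propositional_extensionality; split.
- move=> [a' [h1 h2]]; apply: eqc_trans h2; exact: eqc_map hphi _ _ h1.
- move=> h; exists a; split=> //; exact: eqc_refl.
Qed.

Definition qlift (T U : Type) (r : T -> T -> Prop) (r' : U -> U -> Prop)
  (phi : T -> U) (hphi : forall a b, r a b -> eqc r' (phi a) (phi b))
  (S : quot r) : quot r'.
Proof.
refine (exist _ (fun b => exists a', sval S a' /\ eqc r' (phi a') b) _).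
case: S => S [a e] /=; exists (phi a); rewrite e; exact: lift_pred_eq.
Defined.

Lemma quot_ext (T : Type) (r : T -> T -> Prop) (S S' : quot r) :
  sval S = sval S' -> S = S'.
Proof.
case: S S' => S hS [S' hS'] /= e; subst S'; congr exist; exact: proof_irrelevance.
Qed.

Lemma qlift_cls (T U : Type) (r : T -> T -> Prop) (r' : U -> U -> Prop)
  (phi : T -> U) (hphi : forall a b, r a b -> eqc r' (phi a) (phi b)) (a : T) :
  qlift hphi (cls r a) = cls r' (phi a).
Proof. apply: quot_ext => /=; exact: lift_pred_eq. Qed.

Lemma cls_surj (T : Type) (r : T -> T -> Prop) (S : quot r) :
  exists a, S = cls r a.
Proof. case: S => S [a e]; exists a; apply: quot_ext => /=; exact: e. Qed.

Lemma chom_ext (n m : nat) (p q : chom n m) : (forall u, p u = q u) -> p = q.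
Proof.
case: p q => p hp [q hq] /= e.
have E : p = q by apply: functional_extensionality.
subst q; congr CHom; exact: proof_irrelevance.
Qed.

(* The functor L : sSet -> cSet,                                         *)
(* realised as the quotient of the coproduct  Sigma_m X_m x Poset(..)    *)
(* by the relation generated by (m, X(f) x, p) ~ (k, x, f o p)           *)
(* for f : [m] -> [k] in Delta.                                          *)

Definition Lpre (X : sSet) (n : nat) := {m : nat & (X m * chom n m)%type}.

Inductive Lrel (X : sSet) (n : nat) : Lpre X n -> Lpre X n -> Prop :=
| Lrel_step m k (f : dhom m k) (x : X k) (p : chom n m) :
    Lrel (existT _ m (sact f x, p)) (existT _ k (x, dc f p)).

Definition Lob (X : sSet) (n : nat) := quot (@Lrel X n).

Definition Lpre_act (X : sSet) (n' n : nat) (g : bhom n' n) (a : Lpre X n) : Lpre X n' :=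
  existT _ (projT1 a) ((projT2 a).1, cb (projT2 a).2 g).

Lemma Lpre_act_resp (X : sSet) (n' n : nat) (g : bhom n' n) (a b : Lpre X n) :
  Lrel a b -> eqc (@Lrel X n') (Lpre_act g a) (Lpre_act g b).
Proof.
case=> m k f x p; rewrite /Lpre_act /=.
have -> : cb (dc f p) g = dc f (cb p g) by apply: chom_ext.
apply: eqc_step; exact: Lrel_step.
Qed.

Definition Lact (X : sSet) (n' n : nat) (g : bhom n' n) : Lob X n -> Lob X n' :=
  qlift (@Lpre_act_resp X n' n g).

Lemma Lact_id (X : sSet) (n : nat) (S : Lob X n) : Lact (bid n) S = S.
Proof.
have [[m [x p]] ->] := cls_surj S; rewrite /Lact qlift_cls /Lpre_act /=.
by have -> : cb p (bid n) = p by apply: chom_ext.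
Qed.

Lemma Lact_comp (X : sSet) (n k l : nat) (f : bhom n k) (g : bhom k l) (S : Lob X l) :
  Lact (bcomp g f) S = Lact f (Lact g S).
Proof.
have [[m [x p]] ->] := cls_surj S; rewrite /Lact !qlift_cls /Lpre_act /=.
by have -> : cb p (bcomp g f) = cb (cb p g) f by apply: chom_ext.
Qed.

Definition L (X : sSet) : cSet := @CSet (Lob X) (@Lact X) (@Lact_id X) (@Lact_comp X).

Definition Lpre_map (X Y : sSet) (f : smap X Y) (n : nat) (a : Lpre X n) : Lpre Y n :=
  existT _ (projT1 a) (f _ (projT2 a).1, (projT2 a).2).

Lemma Lpre_map_resp (X Y : sSet) (f : smap X Y) (n : nat) (a b : Lpre X n) :
  Lrel a b -> eqc (@Lrel Y n) (Lpre_map f a) (Lpre_map f b).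
Proof.
case=> m k d x p; rewrite /Lpre_map /= snat.
apply: eqc_step; exact: Lrel_step.
Qed.

Definition Lmapf (X Y : sSet) (f : smap X Y) (n : nat) : L X n -> L Y n :=
  qlift (@Lpre_map_resp X Y f n).

Lemma Lmap_nat (X Y : sSet) (f : smap X Y) (n k : nat) (g : bhom n k) (S : L X k) :
  Lmapf f (cact g S) = cact g (Lmapf f S).
Proof.
have [[m [x p]] ->] := cls_surj S.
by rewrite /= /Lmapf /Lact !qlift_cls.
Qed.

Definition Lmap (X Y : sSet) (f : smap X Y) : cmap (L X) (L Y) :=
  @CMap (L X) (L Y) (@Lmapf X Y f) (@Lmap_nat X Y f).

(* Main.v *)
Require Import Defs.
From mathcomp Require Import all_boot.
From Stdlib Require Import FunctionalExtensionality PropExtensionality ProofIrrelevance.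
Set Implicit Arguments.
Unset Strict Implicit.
Unset Printing Implicit Defensive.
Lemma dhom_ext (m k : nat) (p q : dhom m k) : (forall u, p u = q u) -> p = q.
Proof.
case: p q => p hp [q hq] /= e.
have E : p = q by apply: functional_extensionality.
subst q; congr DHom; exact: proof_irrelevance.
Qed.

Definition dinj m k (d : dhom m k) := forall i j, d i = d j -> i = j.
Definition csurj n r (s : chom n r) := forall i, exists u, s u = i.

Lemma dinj_le m k (d : dhom m k) i j : dinj d -> d i <= d j -> i <= j.
Proof.
move=> hd hij; case: (leqP i j) => // hji.
have h2 : d j <= d i by apply: dmono; exact: ltnW.
have : d i = d j by apply: val_inj; apply/eqP; rewrite eqn_leq hij h2.
move/hd => E; by rewrite E ltnn in hji.
Qed.

Lemma fact_map n m k r r' (d : dhom r m) (s : chom n r) (d' : dhom r' k)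
  (s' : chom n r') (h : dhom m k) :
  dinj d' -> csurj s -> (forall u, h (d (s u)) = d' (s' u)) ->
  exists e : dhom r r', (forall u, e (s u) = s' u) /\ (forall i, d' (e i) = h (d i)).
Proof.
move=> hd' hs hc.
have hs' : forall i : 'I_r.+1, exists u, s u == i.
  by move=> i; have [u hu] := hs i; exists u; apply/eqP.
pose sig i := xchoose (hs' i).
have sigE : forall i, s (sig i) = i by move=> i; apply/eqP; exact: (xchooseP (hs' i)).
have key : forall i, d' (s' (sig i)) = h (d i).
  by move=> i; rewrite -hc sigE.
have mono : forall i j : 'I_r.+1, i <= j -> s' (sig i) <= s' (sig j).
  move=> i j hij; apply: (dinj_le hd'); rewrite !key; apply: dmono; exact: dmono.
exists (DHom mono) => /=; split; last exact: key.
move=> u; apply: hd'; by rewrite key hc.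
Qed.
Lemma section_ex r r' (e : dhom r r') : (forall j, exists i, e i = j) ->
  exists dl : dhom r' r, forall j, e (dl j) = j.
Proof.
move=> he.
pose Ls := [seq val (e i) | i <- enum 'I_r.+1].
have sz : size Ls = r.+1 by rewrite size_map size_enum_ord.
have srt : sorted leq Ls.
  rewrite sorted_map; apply: (@sub_sorted _ (relpre val ltn)).
    by move=> i j /= hij; apply: dmono; exact: ltnW.
  by rewrite -sorted_map val_enum_ord iota_ltn_sorted.
have memL : forall j : 'I_r'.+1, val j \in Ls.
  move=> j; have [i <-] := he j; apply: map_f; exact: mem_enum.
have bd : forall j : 'I_r'.+1, index (val j) Ls < r.+1.
  by move=> j; rewrite -sz index_mem.
have nthL : forall k (hk : k < r.+1), nth 0 Ls k = val (e (Ordinal hk)).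
  move=> k hk; rewrite (nth_map ord0); last by rewrite size_enum_ord.
  by congr (val (e _)); apply: ord_inj; rewrite /= nth_enum_ord.
have mono : forall i j : 'I_r'.+1, i <= j ->
    Ordinal (bd i) <= Ordinal (bd j).
  move=> i j hij /=; case: (leqP (index (val i) Ls) (index (val j) Ls)) => // hlt.
  have := sorted_ltn_index leq_trans srt _ _ (memL j) (memL i) hlt.
  move=> hji; have E : val i = val j by apply/eqP; rewrite eqn_leq hij hji.
  by rewrite E ltnn in hlt.
exists (DHom mono) => j /=.
apply: ord_inj; rewrite /= -(nthL _ (bd j)) nth_index //.
Qed.

Lemma factor_ex n m (p : chom n m) :
  exists r (d : dhom r m) (s : chom n r), dinj d /\ csurj s /\ forall u, d (s u) = p u.
Proof.
pose sI := [seq j <- iota 0 m.+1 | [exists u, val (p u) == j]].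
have srt : sorted ltn sI by apply: sorted_filter; [exact: ltn_trans | exact: iota_ltn_sorted].
have uq : uniq sI by apply: (sorted_uniq ltn_trans ltnn).
have memp : forall u, val (p u) \in sI.
  move=> u; rewrite mem_filter mem_iota /= add0n ltn_ord andbT.
  by apply/existsP; exists u.
have szp : 0 < size sI.
  case E: sI => //; have := memp [ffun=> false]; by rewrite E.
set r := (size sI).-1.
have szE : size sI = r.+1 by rewrite /r prednK.
have bds : forall u, index (val (p u)) sI < r.+1 by move=> u; rewrite -szE index_mem.
have bdd : forall i : 'I_r.+1, nth 0 sI i < m.+1.
  move=> i; have : nth 0 sI i \in sI by rewrite mem_nth // szE.
  by rewrite mem_filter mem_iota add0n => /andP[_ /andP[]].
have dmon : forall i j : 'I_r.+1, i <= j -> Ordinal (bdd i) <= Ordinal (bdd j).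
  move=> i j hij /=; apply: (sorted_leq_nth leq_trans leqnn); rewrite ?inE ?szE //.
  by apply: (sub_sorted _ srt) => a b /ltnW.
have smon : forall u v, cle u v -> Ordinal (bds u) <= Ordinal (bds v).
  move=> u v huv /=; case: (leqP (index (val (p u)) sI) (index (val (p v)) sI)) => // hlt.
  have := sorted_ltn_index ltn_trans srt _ _ (memp v) (memp u) hlt.
  by rewrite ltnNge (cmono p huv).
exists r, (DHom dmon), (CHom smon); split; [|split].
- move=> i j /= /(congr1 val) /= /eqP; rewrite nth_uniq ?szE // => /eqP E.
  exact: val_inj.
- move=> i; have : nth 0 sI i \in sI by rewrite mem_nth // szE.
  rewrite mem_filter => /andP[/existsP[u /eqP hu] _]; exists u; apply: ord_inj => /=.
  by rewrite hu index_uniq ?szE.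
- by move=> u; apply: ord_inj; rewrite /= (nth_index 0 (memp u)).
Qed.
Lemma cls_eq (T : Type) (r : T -> T -> Prop) a b : eqc r a b -> cls r a = cls r b.
Proof.
move=> hab; apply: quot_ext => /=; apply: functional_extensionality => z.
apply: propositional_extensionality; split => h.
- apply: eqc_trans h; exact: eqc_sym.
- exact: eqc_trans h.
Qed.

Lemma cls_inv (T : Type) (r : T -> T -> Prop) a b : cls r a = cls r b -> eqc r a b.
Proof.
move/(congr1 (@proj1_sig _ _)) => /= E.
have : eqc r b b by apply: eqc_refl.
by rewrite -E.
Qed.

Lemma Lcls_step (X : sSet) n m k (g : dhom m k) (x : X k) (p : chom n m) :
  cls (@Lrel X n) (existT _ m (sact g x, p)) = cls (@Lrel X n) (existT _ k (x, dc g p)).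
Proof. apply: cls_eq; apply: eqc_step; exact: Lrel_step. Qed.

Definition Sinv (X Y : sSet) (f : smap X Y) n (u : Lpre Y n) (c : Lob X n) : Prop :=
  exists r (d : dhom r (projT1 u)) (s : chom n r) (x' : X r),
    dinj d /\ csurj s /\ (forall w, d (s w) = (projT2 u).2 w) /\
    f r x' = sact d (projT2 u).1 /\ c = cls (@Lrel X n) (existT _ r (x', s)).

Lemma sact2 (Y : sSet) a b c (g1 : dhom a b) (g2 : dhom b c) (y : Y c) :
  sact g1 (sact g2 y) = sact (dcomp g2 g1) y.
Proof. by rewrite sact_comp. Qed.

Section Main.
Variables (X Y : sSet) (f : smap X Y).
Hypothesis finj : forall m (a b : X m), f m a = f m b -> a = b.

Lemma Sinv_step n m k (h : dhom m k) (y : Y k) (p : chom n m) c :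
  Sinv f (existT _ m (sact h y, p)) c <-> Sinv f (existT _ k (y, dc h p)) c.
Proof.
split.
- move=> [r [d [s [x' [hd [hs [hf [hx ->]]]]]]]] /=; simpl in *.
  have [r' [d' [s' [hd' [hs' hf']]]]] := factor_ex (dc h p).
  have [e [he1 he2]] := @fact_map n m k r r' d s d' s' h hd' hs
    (fun u => etrans (congr1 h (hf u)) (esym (hf' u))).
  have esurj : forall j, exists i, e i = j.
    by move=> j; have [u <-] := hs' j; exists (s u).
  have [dl hdl] := section_ex esurj.
  have fdl : f r' (sact dl x') = sact d' y.
    rewrite snat hx !sact2; congr (sact _ y); apply: dhom_ext => j /=.
    by rewrite -he2 hdl.
  exists r', d', s', (sact dl x'); split => //; split => //; split => //; split => //.
  have x'E : x' = sact e (sact dl x').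
    apply: finj; rewrite snat fdl hx !sact2; congr (sact _ y); apply: dhom_ext => j /=.
    by rewrite he2.
  rewrite {1}x'E Lcls_step; have -> : dc e s = s' by apply: chom_ext => u /=; rewrite he1.
  by [].
- move=> [r' [d' [s' [x'' [hd' [hs' [hf' [hx ->]]]]]]]] /=; simpl in *.
  have [r [d [s [hd [hs hf]]]]] := factor_ex p.
  have [e [he1 he2]] := @fact_map n m k r r' d s d' s' h hd' hs
    (fun u => etrans (congr1 h (hf u)) (esym (hf' u))).
  exists r, d, s, (sact e x''); split => //; split => //; split => //; split.
    rewrite snat hx !sact2; congr (sact _ y); apply: dhom_ext => j /=.
    by rewrite he2.
  rewrite Lcls_step; have -> : dc e s = s' by apply: chom_ext => u /=; rewrite he1.
  by [].
Qed.


Lemma Sinv_eqc n u v : eqc (@Lrel Y n) u v -> forall c, Sinv f u c <-> Sinv f v c.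
Proof.
elim=> {u v} [u v []|u|u v _ IH|u v w _ IH1 _ IH2] c.
- move=> m k h y p; exact: Sinv_step.
- by [].
- by rewrite IH.
- by rewrite IH1 IH2.
Qed.

Lemma Sinv_img n (a : Lpre X n) c : Sinv f (Lpre_map f a) c <-> c = cls (@Lrel X n) a.
Proof.
case: a => m [x p]; split.
- move=> [r [d [s [x' [hd [hs [hf [hx ->]]]]]]]]; simpl in *.
  have -> : x' = sact d x by apply: finj; rewrite hx snat.
  rewrite Lcls_step; have -> // : dc d s = p by apply: chom_ext => u /=; rewrite hf.
- move=> ->; have [r [d [s [hd [hs hf]]]]] := factor_ex p.
  exists r, d, s, (sact d x); split => //; split => //; split => //; split.
    by rewrite snat.
  rewrite Lcls_step; have -> // : dc d s = p by apply: chom_ext => u /=; rewrite hf.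
Qed.

Lemma Lmap_inj n (S1 S2 : L X n) : Lmapf f S1 = Lmapf f S2 -> S1 = S2.
Proof.
have [a ->] := cls_surj S1; have [b ->] := cls_surj S2.
rewrite /Lmapf !qlift_cls => E; have {}E := cls_inv E.
have h1 : Sinv f (Lpre_map f a) (cls (@Lrel X n) a) by apply/Sinv_img.
have := (Sinv_eqc E _).1 h1.
by move/Sinv_img.
Qed.

End Main.

Definition repr_sSet (m : nat) : sSet.
refine (@SSet (fun k => dhom k m) (fun a b g psi => dcomp psi g) _ _).
- by move=> a x; apply: dhom_ext.
- by move=> a b c g1 g2 x; apply: dhom_ext.
Defined.

Lemma sMono_inj (X Y : sSet) (f : smap X Y) : sMono f ->
  forall m (a b : X m), f m a = f m b -> a = b.
Proof.
move=> hf m a b hab.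
pose ga := @SMap (repr_sSet m) X (fun k (psi : dhom k m) => sact psi a)
  (fun k l g psi => sact_comp g psi a).
pose gb := @SMap (repr_sSet m) X (fun k (psi : dhom k m) => sact psi b)
  (fun k l g psi => sact_comp g psi b).
have := hf (repr_sSet m) ga gb _ m (did m).
rewrite /= !sact_id; apply.
by move=> k z /=; rewrite !snat hab.
Qed.

Theorem mainTheorem6 (X Y : sSet) (f : smap X Y) :
  sMono f -> cMono (Lmap f).
Proof.
move=> hf Z g h hgh n z; apply: (Lmap_inj (sMono_inj hf)); exact: hgh.
Qed.
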